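(* Every cyclic and connected extended representation graph for $E$ is isomorphic to $(F_x,\phi_x)$ for some $x\in X^c$.
   Context: $E=(E^0,E^1,s,r)$ is a row-finite directed graph; for each vertex $v$ emitting an edge a fixed edge $e^v\in s^{-1}(v)$ is called special, others nonspecial. The double graph $E_d$ has vertices $E^0$ and edges $e$ (real) and $e^*$ (ghost) for $e\in E^1$, with $s_d(e)=s(e),r_d(e)=r(e),s_d(e^* )=r(e),r_d(e^* )=s(e)$. For a path $p=e_1\dots e_n$ set $p^*=e_n^*\dots e_1^*$. The set $X$ of basis paths consists of the paths in $E_d$: vertices; $p,p^*$ for paths $p$ of length $\ge1$ in $E$; $pq^*$ with $p=e_1\dots e_k,q=f_1\dots f_n$ of length $\ge1$ in $E$, $r(p)=r(q)$, and $e_k\ne f_n$ or $e_k=f_n$ nonspecial. $X^c$ is the set of closed paths of length $\ge1$ in $E_d$ consisting only of real edges or only of ghost edges. An extended representation graph for $E$ is a pair $(F,\phi)$, $F$ a directed graph, $\phi:F\to E_d$ a graph homomorphism, such that for every $w\in F^0$: (i) $w$ is a source or receives exactly one edge $f_w$; (ii) if $w$ is a source or $\phi(f_w)$ is a nonspecial real edge, $\phi$ maps $s^{-1}(w)$ bijectively onto $s_d^{-1}(\phi(w))$; (iii) if $\phi(f_w)$ is a special real edge, onto $s_d^{-1}(\phi(w))\setminus\{\phi(f_w)^*\}$; (iv) if $\phi(f_w)$ is a ghost edge, onto the ghost edges in $s_d^{-1}(\phi(w))$. An isomorphism $(F,\phi)\to(G,\psi)$ is a graph isomorphism $\alpha$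 with $\psi\circ\alpha=\phi$. $F$ is connected if any two vertices are joined by a path when edge directions are ignored; cyclic if it contains a cycle (closed path of length $\ge1$ whose edges have pairwise distinct sources). $(F_x,\phi_x)$ for $x=x_1\dots x_m\in X^c$: for $1\le i\le m$, $X_i$ = basis paths $y=y_1\dots y_n$, $n\ge1$, with $x_iy_1$ a basis path and $y_1\ne x_{i+1}$ ($x_{m+1}=x_1$). Vertices $w_i$ ($1\le i\le m$), $w_{i,y}$ ($y\in X_i$), all distinct; edges $f_i$ from $w_{i-1}$ to $w_i$ ($w_0=w_m$), and $f_{i,y}$ to $w_{i,y}$ from $w_i$ if $|y|=1$, from $w_{i,y_1\dots y_{n-1}}$ if $n\ge2$; $\phi_x(w_i)=r_d(x_i)$, $\phi_x(w_{i,y})=r_d(y)$, $\phi_x(f_i)=x_i$, $\phi_x(f_{i,y})=$ last edge of $y$. *)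

(* Defs.v *)
From Stdlib Require Import List Arith Lia Relations.
Import ListNotations.

Record graph := Graph {
  gV : Type;
  gE : Type;
  gs : gE -> gV;
  gr : gE -> gV
}.

Definition row_finite (E : graph) : Prop :=
  forall v : gV E, exists l : list (gE E), forall e, gs E e = v <-> In e l.

Definition special_choice (E : graph) (sp : gV E -> option (gE E)) : Prop :=
  (forall v e, sp v = Some e -> gs E e = v) /\
  (forall v, sp v = None -> forall e, gs E e <> v).

Definition special (E : graph) (sp : gV E -> option (gE E)) (e : gE E) : Prop :=
  sp (gs E e) = Some e.

(* the double graph E_d: inl e = real edge e, inr e = ghost edge e^* *)
Definition dbl (E : graph) : graph :=
  {| gV := gV E;
     gE := (gE E + gE E)%type;
     gs := fun d => match d with inl e => gs E e | inr e => gr E e end;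
     gr := fun d => match d with inl e => gr E e | inr e => gs E e end |}.

Definition is_real {E : graph} (d : gE (dbl E)) : Prop :=
  match d with inl _ => True | inr _ => False end.
Definition is_ghost {E : graph} (d : gE (dbl E)) : Prop :=
  match d with inl _ => False | inr _ => True end.

Fixpoint gvalid (G : graph) (l : list (gE G)) : Prop :=
  match l with
  | a :: ((b :: _) as t) => gr G a = gs G b /\ gvalid G t
  | _ => True
  end.

Definition gclosed (G : graph) (l : list (gE G)) : Prop :=
  forall f1 l', l = f1 :: l' -> gr G (last l f1) = gs G f1.

Definition cyclic (F : graph) : Prop :=
  exists l : list (gE F), l <> [] /\ gvalid F l /\ gclosed F l /\ NoDup (map (gs F) l).

Definition connected (F : graph) : Prop :=
  forall u v : gV F,
    clos_refl_trans (gV F)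
      (fun a b => exists e, (gs F e = a /\ gr F e = b) \/ (gs F e = b /\ gr F e = a)) u v.

Definition is_ghom (G H : graph) (h0 : gV G -> gV H) (h1 : gE G -> gE H) : Prop :=
  forall e, h0 (gs G e) = gs H (h1 e) /\ h0 (gr G e) = gr H (h1 e).

Definition bij_onto {F H : graph} (phi1 : gE F -> gE H) (w : gV F) (B : gE H -> Prop) : Prop :=
  (forall f, gs F f = w -> B (phi1 f)) /\
  (forall f g, gs F f = w -> gs F g = w -> phi1 f = phi1 g -> f = g) /\
  (forall d, B d -> exists f, gs F f = w /\ phi1 f = d).

Definition ext_rep_graph (E : graph) (sp : gV E -> option (gE E)) (F : graph)
    (phi0 : gV F -> gV (dbl E)) (phi1 : gE F -> gE (dbl E)) : Prop :=
  is_ghom F (dbl E) phi0 phi1 /\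
  forall w : gV F,
    ((forall f, gr F f <> w) \/ (exists f, gr F f = w /\ forall g, gr F g = w -> g = f)) /\
    ((forall f, gr F f <> w) -> bij_onto phi1 w (fun d => gs (dbl E) d = phi0 w)) /\
    (forall f, gr F f = w ->
       (forall e, phi1 f = inl e -> ~ special E sp e ->
          bij_onto phi1 w (fun d => gs (dbl E) d = phi0 w)) /\
       (forall e, phi1 f = inl e -> special E sp e ->
          bij_onto phi1 w (fun d => gs (dbl E) d = phi0 w /\ d <> inr e)) /\
       (forall e, phi1 f = inr e ->
          bij_onto phi1 w (fun d => gs (dbl E) d = phi0 w /\ is_ghost d))).

Definition bijective {A B : Type} (f : A -> B) : Prop :=
  exists g : B -> A, (forall a, g (f a) = a) /\ (forall b, f (g b) = b).

Definition isomorphic (E : graph) (F : graph)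
    (phi0 : gV F -> gV (dbl E)) (phi1 : gE F -> gE (dbl E))
    (G : graph) (psi0 : gV G -> gV (dbl E)) (psi1 : gE G -> gE (dbl E)) : Prop :=
  exists (a0 : gV F -> gV G) (a1 : gE F -> gE G),
    bijective a0 /\ bijective a1 /\ is_ghom F G a0 a1 /\
    (forall v, psi0 (a0 v) = phi0 v) /\ (forall f, psi1 (a1 f) = phi1 f).

(* nonempty basis paths (length >= 1): p, p^*, p q^* ; a list
   map inl p ++ map inr q  encodes p q^*, with q listing the ghost edges in
   the order they are traversed in E_d (so q = [f_n; ...; f_1]). *)
Definition basis (E : graph) (sp : gV E -> option (gE E)) (l : list (gE (dbl E))) : Prop :=
  l <> [] /\ gvalid (dbl E) l /\
  exists p q : list (gE E),
    l = map inl p ++ map inr q /\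
    (forall p' e f q', p = p' ++ [e] -> q = f :: q' -> e <> f \/ ~ special E sp e).

Definition in_Xc (E : graph) (x : list (gE (dbl E))) : Prop :=
  x <> [] /\ gvalid (dbl E) x /\ gclosed (dbl E) x /\
  (Forall is_real x \/ Forall is_ghost x).

(* ---- the graph (F_x, phi_x) for x = x0 :: xs, indices 0-based ---- *)
Section Fx.
Variables (E : graph) (sp : gV E -> option (gE E)) (x0 : gE (dbl E)) (xs : list (gE (dbl E))).

Definition fx_m : nat := S (length xs).
Definition fx_x (i : nat) : gE (dbl E) := nth i (x0 :: xs) x0.

Definition in_Xi (i : nat) (y : list (gE (dbl E))) : Prop :=
  basis E sp y /\
  exists y1 ys, y = y1 :: ys /\ basis E sp [fx_x i; y1] /\ y1 <> fx_x ((i + 1) mod fx_m).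

(* (i, []) is w_i ; (i, y) with y in X_i is w_{i,y} *)
Definition fx_vert (p : nat * list (gE (dbl E))) : Prop :=
  fst p < fx_m /\ (snd p = [] \/ in_Xi (fst p) (snd p)).

Definition FxV : Type := { p : nat * list (gE (dbl E)) | fx_vert p }.

(* index of the source of the edge entering the vertex with index p *)
Definition fx_pred (p : nat * list (gE (dbl E))) : nat * list (gE (dbl E)) :=
  match snd p with
  | [] => ((fst p + fx_m - 1) mod fx_m, [])
  | y => (fst p, removelast y)
  end.

Lemma gvalid_removelast (G : graph) (l : list (gE G)) : gvalid G l -> gvalid G (removelast l).
Proof.
  induction l as [|a t IH]; simpl; auto.
  destruct t as [|b t']; simpl; auto.
  intros [H1 H2]. specialize (IH H2).
  destruct t' as [|c t'']; simpl in *; tauto.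
Qed.

Lemma removelast_map {A B : Type} (f : A -> B) (l : list A) :
  removelast (map f l) = map f (removelast l).
Proof.
  induction l as [|a t IH]; simpl; auto.
  destruct t as [|b t']; simpl in *; auto. rewrite IH. reflexivity.
Qed.

Lemma removelast_cons_hd {A : Type} (q : list A) f r :
  removelast q = f :: r -> exists r', q = f :: r'.
Proof.
  destruct q as [|a t]; simpl; try discriminate.
  destruct t; try discriminate. intros H; inversion H; subst; eauto.
Qed.

Lemma basis_removelast l : basis E sp l -> removelast l <> [] -> basis E sp (removelast l).
Proof.
  intros [Hne [Hv [p [q [Hl Hj]]]]] Hr.
  split; [exact Hr|]. split; [now apply gvalid_removelast|].
  destruct q as [|q1 qt].
  - exists (removelast p), []. split.
    + subst l. simpl. rewrite !app_nil_r. apply removelast_map.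
    + intros p' e f q' _ H. discriminate.
  - exists p, (removelast (q1 :: qt)). split.
    + subst l. rewrite removelast_app by (simpl; discriminate).
      now rewrite removelast_map.
    + intros p' e f q' Hp Hq. apply removelast_cons_hd in Hq as [r' Hq].
      eapply Hj; eauto.
Qed.

Lemma fx_pred_vert p : fx_vert p -> fx_vert (fx_pred p).
Proof.
  destruct p as [i y]. unfold fx_vert, fx_pred; cbn [fst snd].
  intros [Hi Hy]. destruct y as [|y1 yt].
  - cbn [fst snd]. split; [apply Nat.mod_upper_bound; unfold fx_m; lia | now left].
  - cbn [fst snd]. split; [exact Hi|].
    destruct (removelast (y1 :: yt)) as [|z zt] eqn:Hr; [now left|right].
    destruct Hy as [Hy|Hy]; [discriminate|].
    destruct Hy as [Hb [a [b [Hab [Hb2 Hn]]]]].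
    split.
    + rewrite <- Hr. apply basis_removelast; auto. now rewrite Hr.
    + apply removelast_cons_hd in Hr as [r' Hr]. rewrite Hab in Hr.
      inversion Hr; subst. exists z, zt. auto.
Qed.

Definition Fx : graph :=
  {| gV := FxV;
     gE := FxV;   (* the edge f_i (resp. f_{i,y}) is indexed by its range w_i (resp. w_{i,y}) *)
     gs := fun v => exist _ (fx_pred (proj1_sig v)) (fx_pred_vert _ (proj2_sig v));
     gr := fun v => v |}.

Definition phix1 (v : FxV) : gE (dbl E) :=
  match snd (proj1_sig v) with
  | [] => fx_x (fst (proj1_sig v))
  | y => last y x0
  end.

Definition phix0 (v : FxV) : gV (dbl E) := gr (dbl E) (phix1 v).

End Fx.

(* Main.v *)
Require Import Defs.
From Stdlib Require Import List Arith Lia Relations Classical ClassicalEpsilon ProofIrrelevance.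
Import ListNotations.

Lemma modeq a m q r : r < m -> a = m*q + r -> a mod m = r.
Proof. intros. symmetry. eapply Nat.mod_unique; eauto. Qed.

Lemma last_indep {A} (l : list A) z z' : l <> [] -> last l z = last l z'.
Proof. induction l as [|a [|b t] IH]; simpl; intros; auto. congruence. apply IH; discriminate. Qed.

Lemma last_cons_def {A} (a : A) y z : last (a :: y) z = last y a.
Proof. destruct y as [|b y]; [reflexivity|]. change (last (b :: y) z = last (b :: y) a). apply last_indep. discriminate. Qed.

Lemma last_map {A B} (f : A -> B) l x : last (map f l) (f x) = f (last l x).
Proof. induction l as [|a [|b t] IH]; simpl in *; auto. Qed.

Lemma last_nth {A} (a : A) l x : last (a :: l) x = nth (length l) (a :: l) x.
Proof. revert a; induction l as [|b l IH]; intros a; [reflexivity|]. change (last (b::l) x = nth (length l) (b::l) x). apply IH. Qed.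

Lemma gvalid_nth G (l : list (gE G)) x i : gvalid G l -> S i < length l -> gr G (nth i l x) = gs G (nth (S i) l x).
Proof.
  revert i; induction l as [|a [|b t] IH]; intros i Hv Hi; simpl in *; try lia.
  destruct Hv as [H1 H2]. destruct i; auto. apply (IH i H2). simpl. lia.
Qed.

Section Basis.
Variables (E : graph) (sp : gV E -> option (gE E)).

Definition allowed (b a : gE (dbl E)) : Prop :=
  gr (dbl E) b = gs (dbl E) a /\
  match b with inl e => (special E sp e -> a <> inr e) | inr _ => is_ghost a end.

Fixpoint ok (b : gE (dbl E)) (l : list (gE (dbl E))) : Prop :=
  match l with [] => True | a :: l' => allowed b a /\ ok a l' end.

Lemma ok_app b l a : ok b (l ++ [a]) <-> ok b l /\ allowed (last l b) a.
Proof.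
  revert b; induction l as [|c l IH]; intros b.
  - simpl. tauto.
  - cbn [app ok]. rewrite IH. rewrite last_cons_def. tauto.
Qed.

Lemma basis_ok a l : basis E sp (a :: l) -> ok a l.
Proof.
  revert a; induction l as [|b l IH]; intros a; simpl; auto.
  intros [_ [Hv [p [q [Hl Hj]]]]]. simpl in Hv. destruct Hv as [Hg Hv].
  split.
  - split; [exact Hg|]. destruct p as [|e p].
    + simpl in Hl. destruct q as [|f1 [|f2 q]]; simpl in Hl; inversion Hl; subst; exact I.
    + simpl in Hl. inversion Hl; subst. destruct p as [|e' p].
      * simpl in H1. destruct q as [|f q']; simpl in H1; inversion H1; subst.
        intros Hs Hb. inversion Hb; subst.
        destruct (Hj [] e e q' eq_refl eq_refl); tauto.
      * simpl in H1. inversion H1; subst. discriminate.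
  - apply IH. split; [discriminate|]. split; [exact Hv|].
    destruct p as [|e p].
    + simpl in Hl. destruct q as [|f q']; simpl in Hl; inversion Hl; subst.
      exists [], q'. split; [simpl; congruence|]. intros p' e0 f0 q'' Hp. destruct p'; discriminate.
    + simpl in Hl. inversion Hl; subst. exists p, q. split; [simpl; congruence|].
      intros p' e0 f0 q'' Hp Hq. apply (Hj (e :: p') e0 f0 q''); [subst; reflexivity|exact Hq].
Qed.

Lemma ok_basis a l : ok a l -> basis E sp (a :: l).
Proof.
  revert a; induction l as [|b l IH]; intros a.
  - intros _. split; [discriminate|]. split; [exact I|].
    destruct a as [e|e]; [exists [e], [] | exists [], [e]]; (split; [reflexivity|]);
      intros p' e0 f q' Hp Hq; [discriminate Hq| destruct p'; discriminate].
  - intros [[Hg Ha] Hok]. destruct (IH b Hok) as [_ [Hv [p [q [Hl Hj]]]]].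
    split; [discriminate|]. split; [simpl; split; auto|].
    destruct a as [e|e].
    + exists (e :: p), q. split; [simpl; f_equal; exact Hl|].
      intros p' e0 f q' Hp Hq. destruct p' as [|e1 p'].
      * simpl in Hp. inversion Hp; subst. simpl in Hl.
        inversion Hl as [[Hb Hl2]].
        destruct (classic (special E sp e0)) as [Hs|Hs]; [left|right; exact Hs].
        intro Hef; subst. exact (Ha Hs eq_refl).
      * simpl in Hp. inversion Hp; subst. apply (Hj p' e0 f q'); auto.
    + destruct p as [|e1 p]; [|simpl in Hl; inversion Hl; subst; contradiction].
      exists [], (e :: q). split; [simpl in *; congruence|].
      intros p' e0 f q' Hp. destruct p'; discriminate.
Qed.

End Basis.

Section Main.
Variables (E : graph) (sp : gV E -> option (gE E))
  (F : graph) (phi0 : gV F -> gV (dbl E)) (phi1 : gE F -> gE (dbl E)).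
Hypothesis HF : ext_rep_graph E sp F phi0 phi1.

Lemma hom f : phi0 (gs F f) = gs (dbl E) (phi1 f) /\ phi0 (gr F f) = gr (dbl E) (phi1 f).
Proof. exact (proj1 HF f). Qed.

Lemma in_uniq f g : gr F f = gr F g -> f = g.
Proof.
  intros H. destruct (proj2 HF (gr F g)) as [[Hs|[h [_ Hh]]] _].
  - exfalso; exact (Hs g eq_refl).
  - rewrite (Hh f H), (Hh g eq_refl). reflexivity.
Qed.

Lemma bij_onto_ext w (B B' : gE (dbl E) -> Prop) :
  (forall d, B d <-> B' d) -> bij_onto phi1 w B -> bij_onto phi1 w B'.
Proof.
  intros Hx [H1 [H2 H3]]. split; [|split]; auto.
  - intros f Hf. apply Hx. auto.
  - intros d Hd. apply H3. apply Hx. auto.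
Qed.

Lemma out_bij h : bij_onto phi1 (gr F h) (fun d => allowed E sp (phi1 h) d).
Proof.
  destruct (proj2 HF (gr F h)) as [_ [_ Hc]].
  destruct (Hc h eq_refl) as [Hn [Hsp Hg]].
  pose proof (proj2 (hom h)) as Hh.
  destruct (phi1 h) as [e|e] eqn:Hph.
  - destruct (classic (special E sp e)) as [Hs|Hs].
    + eapply bij_onto_ext; [|exact (Hsp e eq_refl Hs)].
      intros d. unfold allowed. rewrite Hh. split; intros [A B]; split; auto.
    + eapply bij_onto_ext; [|exact (Hn e eq_refl Hs)].
      intros d. unfold allowed. rewrite Hh. split; [intros A; split; auto; tauto| intros [A _]; auto].
  - eapply bij_onto_ext; [|exact (Hg e eq_refl)].
    intros d. unfold allowed. rewrite Hh. split; intros [A B]; split; auto.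
Qed.

Lemma out_inj f g : gs F f = gs F g -> phi1 f = phi1 g -> f = g.
Proof.
  intros H1 H2.
  destruct (classic (exists h, gr F h = gs F g)) as [[h Hh]|Hn].
  - destruct (out_bij h) as [_ [Hi _]]. apply Hi; congruence.
  - destruct (proj2 HF (gs F g)) as [_ [Hsrc _]].
    assert (Hs : forall f, gr F f <> gs F g) by (intros f0 Hf0; apply Hn; eauto).
    destruct (Hsrc Hs) as [_ [Hi _]]. apply Hi; auto.
Qed.

Variables (d : gE F) (ls : list (gE F)).
Hypotheses (Hlv : gvalid F (d :: ls)) (Hlc : gclosed F (d :: ls)) (Hnd : NoDup (map (gs F) (d :: ls))).

Definition m := S (length ls).
Definition c i := nth i (d :: ls) d.
Definition X i := phi1 (c i).

Lemma m_nz : m <> 0. Proof. unfold m; lia. Qed.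

Lemma c_succ i : i < m -> gr F (c i) = gs F (c ((i + 1) mod m)).
Proof.
  intros Hi. unfold m in *.
  destruct (Nat.eq_dec (S i) (S (length ls))) as [He|He].
  - rewrite (modeq (i+1) (S (length ls)) 1 0) by lia.
    unfold c. assert (i = length ls) by lia. subst i. rewrite <- last_nth.
    apply (Hlc d ls eq_refl).
  - rewrite (modeq (i+1) (S (length ls)) 0 (i+1)) by lia.
    rewrite Nat.add_1_r. apply gvalid_nth; auto. simpl; lia.
Qed.

Lemma c_gs_inj i j : i < m -> j < m -> gs F (c i) = gs F (c j) -> i = j.
Proof.
  intros Hi Hj H. apply (proj1 (NoDup_nth (map (gs F) (d :: ls)) (gs F d)) Hnd);
    rewrite ?length_map; auto.
  unfold c in H. rewrite !map_nth. exact H.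
Qed.

Lemma c_pred i : i < m -> gr F (c ((i + m - 1) mod m)) = gs F (c i).
Proof.
  intros Hi. destruct i as [|i].
  - rewrite (modeq _ _ 0 (m-1)) by (unfold m in *; lia).
    rewrite c_succ by (unfold m in *; lia).
    rewrite (modeq _ _ 1 0) by (unfold m in *; lia). reflexivity.
  - rewrite (modeq _ _ 1 i) by (unfold m in *; lia).
    rewrite c_succ by (unfold m in *; lia).
    rewrite (modeq _ _ 0 (S i)) by (unfold m in *; lia). reflexivity.
Qed.

Lemma c_allowed i : i < m -> allowed E sp (X i) (X ((i + 1) mod m)).
Proof.
  intros Hi. destruct (out_bij (c i)) as [H1 _]. apply H1. symmetry. apply c_succ; auto.
Qed.

Definition step (v : gV F) (a : gE (dbl E)) : gE F :=
  epsilon (inhabits d) (fun f => gs F f = v /\ phi1 f = a).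

Lemma step_spec h a : allowed E sp (phi1 h) a -> gs F (step (gr F h) a) = gr F h /\ phi1 (step (gr F h) a) = a.
Proof.
  intros Ha. unfold step. apply epsilon_spec.
  destruct (out_bij h) as [_ [_ H3]]. destruct (H3 a Ha) as [f Hf]. eauto.
Qed.

Fixpoint walk (e : gE F) (y : list (gE (dbl E))) : gE F :=
  match y with [] => e | a :: y' => walk (step (gr F e) a) y' end.

Lemma walk_app e y a : walk e (y ++ [a]) = step (gr F (walk e y)) a.
Proof. revert e; induction y; intros e; simpl; auto. Qed.

Lemma walk_spec y e : ok E sp (phi1 e) y -> phi1 (walk e y) = last y (phi1 e).
Proof.
  revert e; induction y as [|a y IH]; intros e; simpl; auto.
  intros [Ha Hok]. destruct (step_spec e a Ha) as [_ H2].
  rewrite IH; rewrite H2; auto. symmetry. apply last_cons_def.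
Qed.

Definition V (i : nat) (y : list (gE (dbl E))) : Prop :=
  i < m /\ (y = [] \/ (ok E sp (X i) y /\ forall y1 ys, y = y1 :: ys -> y1 <> X ((i + 1) mod m))).

Lemma V_prefix i y a : V i (y ++ [a]) -> V i y.
Proof.
  intros [Hi [H|[Hok Hh]]]; [destruct y; discriminate|].
  split; auto. destruct y as [|b y]; [left; auto|right].
  apply ok_app in Hok. split; [tauto|]. intros y1 ys Heq. inversion Heq; subst.
  apply (Hh y1 (ys ++ [a])). reflexivity.
Qed.

Lemma tree_not_cycle y : forall i, V i y -> y <> [] -> forall j, j < m -> walk (c i) y <> c j.
Proof.
  induction y as [|a y IH] using rev_ind; intros i HV Hne j Hj Heq; [congruence|].
  rewrite walk_app in Heq.
  destruct HV as [Hi [H|[Hok Hh]]]; [destruct y; discriminate|].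
  pose proof Hok as Hok2. apply ok_app in Hok2. destruct Hok2 as [Hoky Hal].
  unfold X in Hal, Hoky. rewrite <- walk_spec in Hal by exact Hoky.
  destruct (step_spec _ _ Hal) as [Hs Hp].
  rewrite Heq in Hs, Hp.
  destruct y as [|b y'].
  - simpl in Hs. rewrite c_succ in Hs by auto.
    apply c_gs_inj in Hs; [|auto|apply Nat.mod_upper_bound, m_nz].
    subst j. apply (Hh a []); [reflexivity|]. unfold X; symmetry; exact Hp.
  - rewrite <- (c_pred j Hj) in Hs. apply in_uniq in Hs.
    assert (HVp : V i (b :: y')) by (apply (V_prefix i _ a); split; auto).
    exact (IH i HVp ltac:(discriminate) _ (Nat.mod_upper_bound _ _ m_nz) (eq_sym Hs)).
Qed.

Lemma walk_inj y : forall i i' y', V i y -> V i' y' -> walk (c i) y = walk (c i') y' -> i = i' /\ y = y'.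
Proof.
  induction y as [|a y IH] using rev_ind; intros i i' y' HV HV' Heq.
  - destruct y' as [|b y'].
    + split; auto. apply c_gs_inj; [apply HV|apply HV'|]. simpl in Heq. congruence.
    + exfalso. apply (tree_not_cycle (b :: y') i' HV' ltac:(discriminate) i (proj1 HV)). auto.
  - destruct y' as [|b y'] using rev_ind.
    + exfalso. apply (tree_not_cycle (y ++ [a]) i HV ltac:(destruct y; discriminate) i' (proj1 HV')). auto.
    + clear IHy'. rewrite !walk_app in Heq.
      assert (Ha : forall i y a, V i (y ++ [a]) -> allowed E sp (phi1 (walk (c i) y)) a).
      { intros i0 y0 a0 [_ [H|[Hok _]]]; [destruct y0; discriminate|].
        apply ok_app in Hok. rewrite walk_spec by tauto. tauto. }
      destruct (step_spec _ _ (Ha _ _ _ HV)) as [Hs1 Hp1].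
      destruct (step_spec _ _ (Ha _ _ _ HV')) as [Hs2 Hp2].
      rewrite Heq in Hs1, Hp1. rewrite Hs1 in Hs2. rewrite Hp1 in Hp2. subst b.
      apply in_uniq in Hs2.
      destruct (IH i i' y' (V_prefix _ _ _ HV) (V_prefix _ _ _ HV') Hs2) as [-> ->]. auto.
Qed.


Hypothesis Hconn : connected F.

Definition rpred (p : nat * list (gE (dbl E))) : nat * list (gE (dbl E)) :=
  match snd p with
  | [] => ((fst p + m - 1) mod m, [])
  | y => (fst p, removelast y)
  end.

Lemma back_step i y : V i y ->
  V (fst (rpred (i, y))) (snd (rpred (i, y))) /\
  gr F (walk (c (fst (rpred (i, y)))) (snd (rpred (i, y)))) = gs F (walk (c i) y).
Proof.
  intros HV. destruct y as [|a y0] using rev_ind.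
  - unfold rpred; cbn [fst snd]. split; [split; [apply Nat.mod_upper_bound, m_nz| left; reflexivity]|].
    apply c_pred. apply HV.
  - clear IHy0.
    assert (Hr : rpred (i, y0 ++ [a]) = (i, y0)).
    { assert (Hg : forall y, y <> [] -> rpred (i, y) = (i, removelast y)).
      { intros [|b y] Hy; [congruence|reflexivity]. }
      rewrite Hg by (destruct y0; discriminate). rewrite removelast_last. reflexivity. }
    rewrite Hr. simpl. split; [exact (V_prefix _ _ _ HV)|].
    rewrite walk_app.
    destruct HV as [_ [H|[Hok _]]]; [destruct y0; discriminate|].
    apply ok_app in Hok. destruct Hok as [Hok Hal]. unfold X in Hok, Hal.
    rewrite <- walk_spec in Hal by exact Hok.
    symmetry. apply (step_spec _ _ Hal).
Qed.

Lemma fwd_step i y e : V i y -> gs F e = gr F (walk (c i) y) ->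
  exists i' y', V i' y' /\ walk (c i') y' = e.
Proof.
  intros HV He. set (h := walk (c i) y) in *. remember (phi1 e) as a eqn:Ha.
  assert (Hal : allowed E sp (phi1 h) a) by (destruct (out_bij h) as [H1 _]; rewrite Ha; apply H1; exact He).
  destruct (step_spec h a Hal) as [Hs Hp].
  assert (Hef : e = step (gr F h) a) by (apply out_inj; congruence).
  destruct HV as [Hi HV'].
  destruct y as [|b y'].
  - destruct (classic (a = X ((i + 1) mod m))) as [Hx|Hx].
    + exists ((i + 1) mod m), []. split; [split; [apply Nat.mod_upper_bound, m_nz|left; reflexivity]|].
      cbn [walk]. symmetry. apply out_inj; [|unfold X in Hx; congruence].
      rewrite He. unfold h; cbn [walk]. first [apply c_succ; auto | symmetry; apply c_succ; auto].
    + exists i, [a]. split.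
      * split; auto. right. split; [simpl; split; [exact Hal|exact I]|].
        intros y1 ys Hy; inversion Hy; subst; auto.
      * simpl. symmetry. exact Hef.
  - exists i, ((b :: y') ++ [a]). split.
    + split; auto. right. destruct HV' as [H|[Hok Hh]]; [discriminate|]. split.
      * apply ok_app. split; auto. unfold X in *. rewrite <- walk_spec by exact Hok. exact Hal.
      * intros y1 ys Hy. inversion Hy; subst. apply (Hh y1 y'). reflexivity.
    + rewrite walk_app. symmetry. exact Hef.
Qed.

Lemma surj v : exists i y, V i y /\ gr F (walk (c i) y) = v.
Proof.
  pose proof (Hconn (gr F (c 0)) v) as H. apply clos_rt_rt1n in H.
  assert (H0 : exists i y, V i y /\ gr F (walk (c i) y) = gr F (c 0)).
  { exists 0, []. split; [split; [unfold m; lia|left; reflexivity]|reflexivity]. }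
  revert H0. induction H as [x|x y z Hxy Hyz IH]; auto.
  intros [i [y0 [HV Hx]]]. apply IH.
  destruct Hxy as [e [[Hs Hr]|[Hs Hr]]].
  - destruct (fwd_step i y0 e HV ltac:(congruence)) as [i' [y' [HV' He]]].
    exists i', y'. split; auto. congruence.
  - assert (Heq : e = walk (c i) y0) by (apply in_uniq; congruence).
    destruct (back_step i y0 HV) as [HV' Hg].
    exists (fst (rpred (i, y0))), (snd (rpred (i, y0))). split; auto. congruence.
Qed.


Definition x0 := phi1 d.
Definition xs := map phi1 ls.

Lemma fxm : fx_m E xs = m.
Proof. unfold fx_m, xs, m. rewrite length_map. reflexivity. Qed.

Lemma fxx i : fx_x E x0 xs i = X i.
Proof. unfold fx_x, X, c, x0, xs. change (phi1 d :: map phi1 ls) with (map phi1 (d :: ls)). apply map_nth. Qed.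

Lemma vert_iff p : fx_vert E sp x0 xs p <-> V (fst p) (snd p).
Proof.
  destruct p as [i y]. unfold fx_vert, V, in_Xi. cbn [fst snd]. rewrite fxm.
  split; intros [Hi H]; split; auto; destruct H as [H|H]; auto.
  - right. destruct H as [Hb [y1 [ys [Hy [Hb2 Hn]]]]]. subst y. rewrite !fxx in *. split.
    + split.
      * exact (proj1 (basis_ok E sp _ _ Hb2)).
      * exact (basis_ok E sp _ _ Hb).
    + intros a b Hab. inversion Hab; subst. exact Hn.
  - destruct y as [|y1 ys]; [left; reflexivity|right].
    destruct H as [[Hal Hok] Hh]. split; [apply ok_basis; exact Hok|].
    exists y1, ys. split; [reflexivity|]. rewrite !fxx. split.
    + apply ok_basis. simpl. split; auto.
    + exact (Hh y1 ys eq_refl).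
Qed.

Definition FV := FxV E sp x0 xs.

Definition Bm (v : FV) : gE F := walk (c (fst (proj1_sig v))) (snd (proj1_sig v)).

Lemma Bm_V (v : FV) : V (fst (proj1_sig v)) (snd (proj1_sig v)).
Proof. apply vert_iff. exact (proj2_sig v). Qed.

Lemma sig_eq (u v : FV) : proj1_sig u = proj1_sig v -> u = v.
Proof. destruct u as [pu Hu], v as [pv Hv]; simpl; intros ->. f_equal. apply proof_irrelevance. Qed.

Lemma Bm_inj u v : Bm u = Bm v -> u = v.
Proof.
  intros H. apply sig_eq. destruct (walk_inj _ _ _ _ (Bm_V u) (Bm_V v) H) as [H1 H2].
  destruct (proj1_sig u), (proj1_sig v). simpl in *. subst. reflexivity.
Qed.

Lemma Bm_P1 v : phi1 (Bm v) = phix1 E sp x0 xs v.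
Proof.
  pose proof (Bm_V v) as HV. unfold Bm, phix1 in *. destruct (proj1_sig v) as [i y]. cbn [fst snd] in *.
  destruct y as [|a y].
  - simpl. rewrite fxx. reflexivity.
  - destruct HV as [_ [H|[Hok _]]]; [discriminate|].
    unfold X in Hok. rewrite walk_spec by exact Hok. apply last_indep. discriminate.
Qed.

Lemma fxpred_eq p : fx_pred E xs p = rpred p.
Proof. unfold fx_pred, rpred. rewrite fxm. reflexivity. Qed.

Lemma Bm_P2 v : gr F (Bm (gs (Fx E sp x0 xs) v)) = gs F (Bm v).
Proof.
  pose proof (Bm_V v) as HV. unfold Bm. cbn [gs Fx proj1_sig].
  rewrite fxpred_eq. destruct (proj1_sig v) as [i y]. cbn [fst snd] in *.
  exact (proj2 (back_step i y HV)).
Qed.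

Lemma surjV w : exists v : FV, gr F (Bm v) = w.
Proof.
  destruct (surj w) as [i [y [HV H]]].
  exists (exist _ (i, y) (proj2 (vert_iff (i, y)) HV)). exact H.
Qed.

Lemma surjE f : exists v : FV, Bm v = f.
Proof.
  destruct (surjV (gr F f)) as [v H]. exists v. apply in_uniq. exact H.
Qed.

Definition a0 (w : gV F) : FV := proj1_sig (constructive_indefinite_description _ (surjV w)).
Definition a1 (f : gE F) : FV := proj1_sig (constructive_indefinite_description _ (surjE f)).

Lemma a0_spec w : gr F (Bm (a0 w)) = w.
Proof. unfold a0. destruct (constructive_indefinite_description _ _). simpl. exact e. Qed.
Lemma a1_spec f : Bm (a1 f) = f.
Proof. unfold a1. destruct (constructive_indefinite_description _ _). simpl. exact e. Qed.

Lemma a0_char w v : gr F (Bm v) = w -> a0 w = v.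
Proof. intros H. apply Bm_inj, in_uniq. rewrite a0_spec. auto. Qed.

Lemma iso_part : isomorphic E F phi0 phi1 (Fx E sp x0 xs) (phix0 E sp x0 xs) (phix1 E sp x0 xs).
Proof.
  exists a0, a1. split; [|split; [|split; [|split]]].
  - exists (fun v => gr F (Bm v)). split; [apply a0_spec|]. intros v. apply a0_char. reflexivity.
  - exists Bm. split; [apply a1_spec|]. intros v. apply Bm_inj. apply a1_spec.
  - intros f. split.
    + apply a0_char. rewrite Bm_P2. rewrite a1_spec. reflexivity.
    + apply a0_char. change (gr F (Bm (a1 f)) = gr F f). rewrite a1_spec. reflexivity.
  - intros v. unfold phix0. rewrite <- Bm_P1. rewrite <- (proj2 (hom _)). rewrite a0_spec. reflexivity.
  - intros f. rewrite <- Bm_P1. rewrite a1_spec. reflexivity.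
Qed.

Lemma gvalid_map l : gvalid F l -> gvalid (dbl E) (map phi1 l).
Proof.
  induction l as [|a [|b t] IH]; simpl; auto.
  intros [H1 H2]. split; [|apply IH; exact H2].
  change (gr (dbl E) (phi1 a) = gs (dbl E) (phi1 b)). rewrite <- (proj2 (hom a)), <- (proj1 (hom b)). congruence.
Qed.

Lemma ghost_succ i : i < m -> is_ghost (X i) -> is_ghost (X ((i + 1) mod m)).
Proof.
  intros Hi. pose proof (proj2 (c_allowed i Hi)) as H. revert H. destruct (X i); simpl; tauto.
Qed.

Lemma ghost_all j : j < m -> is_ghost (X j) -> forall k, is_ghost (X ((j + k) mod m)).
Proof.
  intros Hj Hg k. induction k as [|k IH].
  - rewrite Nat.add_0_r, Nat.mod_small by auto. exact Hg.
  - apply ghost_succ in IH; [|apply Nat.mod_upper_bound, m_nz].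
    rewrite Nat.Div0.add_mod_idemp_l in IH. replace (j + S k) with (j + k + 1) by lia. exact IH.
Qed.

Lemma xc_part : in_Xc E (x0 :: xs).
Proof.
  assert (Hx : x0 :: xs = map phi1 (d :: ls)) by reflexivity.
  split; [discriminate|]. split; [|split].
  - rewrite Hx. apply gvalid_map. exact Hlv.
  - intros f1 l' Heq. injection Heq as <- <-. change (gr (dbl E) (last (map phi1 (d :: ls)) (phi1 d)) = gs (dbl E) (phi1 d)).
    rewrite last_map. rewrite <- (proj2 (hom _)). rewrite (Hlc d ls eq_refl). apply hom.
  - rewrite Hx.
    assert (Hn : forall z, In z (map phi1 (d :: ls)) -> exists n, n < m /\ X n = z).
    { intros z Hz. destruct (In_nth _ _ (phi1 d) Hz) as [n [Hn Hnz]].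
      rewrite length_map in Hn. rewrite map_nth in Hnz. exists n. split; auto. }
    destruct (classic (exists j, j < m /\ is_ghost (X j))) as [[j [Hj Hg]]|Hng].
    + right. apply Forall_forall. intros z Hz. destruct (Hn z Hz) as [n [Hnm <-]].
      pose proof (ghost_all j Hj Hg (n + m - j)) as H.
      rewrite (modeq _ _ 1 n) in H by lia. exact H.
    + left. apply Forall_forall. intros z Hz. destruct (Hn z Hz) as [n [Hnm <-]].
      assert (~ is_ghost (X n)) by eauto. revert H. destruct (X n); simpl; tauto.
Qed.

End Main.

Theorem proposition5p16 (E : graph) (sp : gV E -> option (gE E))
    (Hrf : row_finite E) (Hsp : special_choice E sp)
    (F : graph) (phi0 : gV F -> gV (dbl E)) (phi1 : gE F -> gE (dbl E))
    (HF : ext_rep_graph E sp F phi0 phi1)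
    (Hcyc : cyclic F) (Hconn : connected F) :
  exists (x0 : gE (dbl E)) (xs : list (gE (dbl E))),
    in_Xc E (x0 :: xs) /\
    isomorphic E F phi0 phi1 (Fx E sp x0 xs) (phix0 E sp x0 xs) (phix1 E sp x0 xs).
Proof.
  destruct Hcyc as [l [Hne [Hv [Hc Hnd]]]].
  destruct l as [|d ls]; [congruence|].
  exists (phi1 d), (map phi1 ls). split.
  - eapply xc_part; eauto.
  - eapply iso_part; eauto.
Qed.
Print Assumptions proposition5p16.
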